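(* Suppose that $n=m$ and $W=(w_{ij})\in(\mathbb{R}_{>0})^{n\times n}$ is symmetric. Then $T=T(W)=(t_{ij})$ is also symmetric, and the Jacobian of the map $$(\log w_{ij},\ 1\le i\le j\le n)\mapsto (\log t_{ij},\ 1\le i\le j\le n)$$ is $\pm 1$.
   Context: The geometric RSK map $T:(\mathbb{R}_{>0})^{n\times m}\to(\mathbb{R}_{>0})^{n\times m}$ is defined by local moves: for $2\le i\le n$, $2\le j\le m$, $l_{ij}$ replaces the submatrix $\begin{pmatrix} x_{i-1,j-1}& x_{i-1,j}\\ x_{i,j-1}& x_{ij}\end{pmatrix}=\begin{pmatrix} a& b\\ c& d\end{pmatrix}$ by $\begin{pmatrix} bc/(ab+ac) & b\\ c& d(b+c) \end{pmatrix}$; $l_{i1}$ replaces $x_{i1}$ by $x_{i-1,1}x_{i1}$; $l_{1j}$ replaces $x_{1j}$ by $x_{1,j-1}x_{1j}$; $l_{11}$ is the identity. With $\pi^j_i=l_{ij}\circ\cdots\circ l_{i1}$, $R_i=\pi_1^{m-i+1}\circ\cdots\circ\pi^m_i$ ($i\le m$), $R_i=\pi^1_{i-m+1}\circ\cdots\circ\pi^m_i$ ($i\ge m$), $T=R_n\circ\cdots\circ R_1$. Here $m=n$. *)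

(* Defs.v *)
From HB Require Import structures.
From mathcomp Require Import all_boot all_order all_algebra.
From mathcomp Require Import all_classical all_reals all_analysis.
Set Implicit Arguments. Unset Strict Implicit. Unset Printing Implicit Defensive.
Import Order.TTheory GRing.Theory Num.Theory.
Local Open Scope ring_scope.

(* Matrices are represented as functions nat -> nat -> R, with the paper's
   1-based indices: entry x_{ij} of an n x m matrix is X i j, 1<=i<=n, 1<=j<=m.
   Entries outside this range are never read by the maps below. *)

Definition upd (R : Type) (X : nat -> nat -> R) (i j : nat) (v : R) :
  nat -> nat -> R :=
  fun p q => if (p == i) && (q == j) then v else X p q.

Definition lmove (R : realType) (i j : nat) (X : nat -> nat -> R) :
  nat -> nat -> R :=
  if (i == 1%N) && (j == 1%N) then X
  else if j == 1%N then upd X i 1 (X i.-1 1%N * X i 1%N)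
  else if i == 1%N then upd X 1 j (X 1%N j.-1 * X 1%N j)
  else
    let a := X i.-1 j.-1 in let b := X i.-1 j in
    let c := X i j.-1 in let d := X i j in
    upd (upd X i.-1 j.-1 (b * c / (a * b + a * c))) i j (d * (b + c)).

Definition gpi (R : realType) (i j : nat) (X : nat -> nat -> R) :=
  foldl (fun Y k => lmove i k Y) X (iota 1 j).

(* R_i = pi^{m-min(i,m)+1}_{i-min(i,m)+1} o ... o pi^m_i (pi^m_i applied
   first); this covers both cases i <= m and i >= m of the paper. *)
Definition growR (R : realType) (m i : nat) (X : nat -> nat -> R) :=
  foldl (fun Y k => gpi (i - k) (m - k) Y) X (iota 0 (minn i m)).

Definition gRSK (R : realType) (n m : nat) (X : nat -> nat -> R) :=
  foldl (fun Y i => growR m i Y) X (iota 1 n).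

(* Coordinates (i,j), 1 <= i <= j <= n; here stored 0-based as ordinals. *)
Definition UT (n : nat) := {p : 'I_n * 'I_n | (p.1 <= p.2)%N}.

(* W with the symmetric pair of entries w_{ij}=w_{ji} indexed by b multiplied
   by e^t, i.e. log w_b shifted by t. *)
Definition pert (R : realType) (n : nat) (W : nat -> nat -> R) (b : UT n)
  (t : R) : nat -> nat -> R :=
  fun p q =>
    if ((p == (val b).1.+1) && (q == (val b).2.+1))
       || ((p == (val b).2.+1) && (q == (val b).1.+1))
    then W p q * expR t else W p q.

Definition logT (R : realType) (n : nat) (W : nat -> nat -> R) (b a : UT n) :
  R -> R :=
  fun t => ln (gRSK n n (pert W b t) (val a).1.+1 (val a).2.+1).

(* Jacobian matrix of (log w_{ij})_{i<=j} |-> (log t_{ij})_{i<=j} at W: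
   entry (a,b) is d(log t_a)/d(log w_b), coordinates enumerated by enum. *)
Definition logjac (R : realType) (n : nat) (W : nat -> nat -> R) :
  'M[R]_#|{: UT n}| :=
  \matrix_(a < #|{: UT n}|, b < #|{: UT n}|)
    derive1 (logT W (@enum_val _ (mem {: UT n}) b) (@enum_val _ (mem {: UT n}) a)) 0.

(* Main.v *)
Require Import Defs.
From HB Require Import structures.
From mathcomp Require Import all_boot all_order all_algebra.
From mathcomp Require Import all_classical all_reals all_analysis.
From mathcomp Require Import zify ring lra fingroup perm.
Import Order.TTheory GRing.Theory Num.Theory.
Local Open Scope ring_scope.

Definition gmove {T : Type} (fa fd : T -> T -> T -> T -> T) (g : T -> T -> T)
  (i j : nat) (X : nat -> nat -> T) : nat -> nat -> T :=
  if (i == 1%N) && (j == 1%N) then X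
  else if j == 1%N then upd X i 1 (g (X i.-1 1%N) (X i 1%N))
  else if i == 1%N then upd X 1 j (g (X 1%N j.-1) (X 1%N j))
  else upd (upd X i.-1 j.-1 (fa (X i.-1 j.-1) (X i.-1 j) (X i j.-1) (X i j)))
        i j (fd (X i.-1 j.-1) (X i.-1 j) (X i j.-1) (X i j)).

Definition wr (i j p q : nat) : bool :=
  if (i == 1%N) && (j == 1%N) then false
  else if j == 1%N then (p == i) && (q == 1%N)
  else if i == 1%N then (p == 1%N) && (q == j)
  else ((p == i.-1) && (q == j.-1)) || ((p == i) && (q == j)).

Definition rd (i j p q : nat) : bool :=
  if (i == 1%N) && (j == 1%N) then false
  else if j == 1%N then ((p == i.-1) || (p == i)) && (q == 1%N)
  else if i == 1%N then (p == 1%N) && ((q == j.-1) || (q == j))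
  else ((p == i.-1) || (p == i)) && ((q == j.-1) || (q == j)).

Ltac crunch := repeat (case: ifP => //=); try (move=> *; lia).

Lemma gframe {T} fa fd g i j (X : nat -> nat -> T) p q :
  (1 <= i)%N -> (1 <= j)%N -> ~~ wr i j p q -> gmove fa fd g i j X p q = X p q.
Proof.
rewrite /gmove /wr /upd => hi hj.
by repeat (case: ifP => //=); move=> *; lia.
Qed.

Lemma glocal {T} fa fd g i j (X Y : nat -> nat -> T) p q :
  (1 <= i)%N -> (1 <= j)%N -> wr i j p q ->
  (forall p' q', rd i j p' q' -> X p' q' = Y p' q') ->
  gmove fa fd g i j X p q = gmove fa fd g i j Y p q.
Proof.
rewrite /gmove /wr /rd /upd => hi hj hw h.
have [ei|ni] := eqVneq i 1%N; have [ej|nj] := eqVneq j 1%N; move: hw h; rewrite ?ei ?ej ?eqxx /=.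
- by [].
- rewrite (negbTE nj) /= => /andP[/eqP-> /eqP->] h. by rewrite !eqxx /= !h //= ?eqxx ?orbT.
- rewrite (negbTE ni) /= => /andP[/eqP-> /eqP->] h. by rewrite !eqxx /= !h //= ?eqxx ?orbT.
- rewrite (negbTE ni) (negbTE nj) /= => hw h.
  case/orP: hw => /andP[/eqP-> /eqP->]; rewrite !eqxx /=.
  + case: ifP => [|_]; first lia.
    by rewrite !h //= !eqxx ?orbT.
  + by rewrite !h //= !eqxx ?orbT.
Qed.

Lemma wr_rd i j p q : wr i j p q -> rd i j p q.
Proof. by rewrite /wr /rd; repeat (case: ifP => //= _); lia. Qed.

Definition dep (e f : nat * nat) : bool :=
  let: (i, j) := e in let: (k, l) := f in
  [&& ~~ ((i == 1%N) && (j == 1%N)), ~~ ((k == 1%N) && (l == 1%N)),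
      (i <= k.+1)%N, (k <= i.+1)%N, (j <= l.+1)%N, (l <= j.+1)%N,
      ~~ ((i == k.+1) && (l == j.+1)) & ~~ ((k == i.+1) && (j == l.+1))].

Lemma depC e f : dep e f = dep f e.
Proof. case: e f => i j [k l] /=; apply/idP/idP; lia. Qed.

Lemma indep_disj i j k l p q : (1 <= i)%N -> (1 <= j)%N -> (1 <= k)%N -> (1 <= l)%N ->
  ~~ dep (i, j) (k, l) -> wr i j p q -> rd k l p q -> False.
Proof.
move=> hi hj hk hl; rewrite /dep /wr /rd.
by repeat (case: ifP => //= ?); lia.
Qed.

Lemma gcomm {T} fa fd g i j k l (X : nat -> nat -> T) :
  (1 <= i)%N -> (1 <= j)%N -> (1 <= k)%N -> (1 <= l)%N ->
  ~~ dep (i, j) (k, l) ->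
  gmove fa fd g i j (gmove fa fd g k l X) = gmove fa fd g k l (gmove fa fd g i j X).
Proof.
move=> hi hj hk hl hd; apply/funext => p; apply/funext => q.
have hd' : ~~ dep (k, l) (i, j) by rewrite depC.
case hw1: (wr i j p q).
  have hw2 : ~~ wr k l p q.
    by apply/negP => /wr_rd; apply: indep_disj hw1.
  rewrite [RHS]gframe //.
  apply: glocal => // p' q' hr; apply: gframe => //.
  by apply/negP => hw; apply: indep_disj hw hr.
case hw2: (wr k l p q).
  rewrite [LHS]gframe //; last by rewrite hw1.
  apply: glocal => // p' q' hr; symmetry; apply: gframe => //.
  by apply/negP => hw; apply: indep_disj hw hr.
by rewrite !gframe // ?hw1 ?hw2.
Qed.

Definition tr {T} (X : nat -> nat -> T) : nat -> nat -> T := fun p q => X q p.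

Lemma gtr {T} fa fd g i j (X : nat -> nat -> T) :
  (forall a b c d, fa a b c d = fa a c b d) ->
  (forall a b c d, fd a b c d = fd a c b d) ->
  gmove fa fd g i j (tr X) = tr (gmove fa fd g j i X).
Proof.
move=> hfa hfd; apply/funext => p; apply/funext => q.
rewrite /gmove /tr /upd.
have [ei|ni] := eqVneq i 1%N; have [ej|nj] := eqVneq j 1%N;
  rewrite ?ei ?ej ?(negbTE ni) ?(negbTE nj) ?eqxx //=.
- by rewrite andbC.
- by rewrite andbC.
- rewrite (andbC (q == j)) (andbC (q == j.-1)).
  by repeat case: ifP => // _; rewrite ?hfa ?hfd.
Qed.

Definition agree {T} (n : nat) (X Y : nat -> nat -> T) :=
  forall p q, (1 <= p <= n)%N -> (1 <= q <= n)%N -> X p q = Y p q.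

Lemma rd_range i j p q n : (1 <= i <= n)%N -> (1 <= j <= n)%N -> rd i j p q ->
  (1 <= p <= n)%N /\ (1 <= q <= n)%N.
Proof. by rewrite /rd => hi hj; repeat (case: ifP => //= ?); lia. Qed.

Lemma gagree {T} fa fd g n i j (X Y : nat -> nat -> T) :
  (1 <= i <= n)%N -> (1 <= j <= n)%N -> agree n X Y ->
  agree n (gmove fa fd g i j X) (gmove fa fd g i j Y).
Proof.
move=> hi hj h p q hp hq.
have hi1 : (1 <= i)%N by lia.
have hj1 : (1 <= j)%N by lia.
case hw: (wr i j p q).
  apply: glocal => // p' q' hr.
  by case: (rd_range _ _ _ _ _ hi hj hr) => ??; apply: h.
by rewrite !gframe ?hw //; apply: h.
Qed.

Definition gev {T} fa fd g (w : seq (nat * nat * nat)) (X : nat -> nat -> T) :=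
  foldl (fun Y e => gmove fa fd g e.1.1 e.1.2 Y) X w.

Lemma gev_cat {T} fa fd g u v (X : nat -> nat -> T) :
  gev fa fd g (u ++ v) X = gev fa fd g v (gev fa fd g u X).
Proof. by rewrite /gev foldl_cat. Qed.

Definition inr1 (e : nat * nat * nat) := (1 <= e.1.1)%N && (1 <= e.1.2)%N.

Lemma move_through {T} fa fd g (e : nat * nat * nat) u (X : nat -> nat -> T) :
  inr1 e -> all inr1 u -> all (fun f => ~~ dep e.1 f.1) u ->
  gmove fa fd g e.1.1 e.1.2 (gev fa fd g u X) = gev fa fd g u (gmove fa fd g e.1.1 e.1.2 X).
Proof.
case: e => [[i j] m] /=.
elim: u X => [|f u IH] X //= he /andP[hf hu] /andP[hd hdu].
rewrite IH //; congr gev.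
move: he hf hd; case: f => [[k l] m'] /=.
by rewrite /inr1 /= => /andP[??] /andP[??] hd; rewrite gcomm.
Qed.

Lemma reorder {T} fa fd g (R1 R2 : rel (nat * nat * nat)) w1 w2 (X : nat -> nat -> T) :
  all inr1 w1 -> uniq w1 -> perm_eq w1 w2 -> pairwise R1 w1 -> pairwise R2 w2 ->
  (forall e f, e \in w1 -> f \in w1 -> dep e.1 f.1 -> R1 e f -> R2 e f) ->
  (forall e f, R2 e f -> R2 f e -> False) ->
  gev fa fd g w1 X = gev fa fd g w2 X.
Proof.
elim: w1 w2 X => [|e w1 IH] w2 X.
  by move=> _ _ /perm_size /= /esym /size0nil -> .
move=> /= /andP[he hall] /andP[enw1 uw1] hp. move=> /andP[hR1e hR1] hR2 hagr hasym.
have ew2 : e \in w2 by rewrite -(perm_mem hp) mem_head.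
have uw2 : uniq w2 by rewrite -(perm_uniq hp) /= enw1.
case/splitPr: ew2 hp hR2 uw2 => u v hp hR2 uw2.
have hp' : perm_eq w1 (u ++ v).
  rewrite -(perm_cons e); apply: (perm_trans hp).
  by rewrite -cat1s perm_catCA.
move: hR2; rewrite pairwise_cat => /and3P[hal hR2u /andP[hR2e hR2v]].
have hallu : all inr1 u.
  apply/allP => f fu.
  have : f \in e :: w1 by rewrite (perm_mem hp) mem_cat fu.
  rewrite inE => /orP[/eqP->//|fw1]; exact: (allP hall).
have hindep : all (fun f => ~~ dep e.1 f.1) u.
  apply/allP => f fu; apply/negP => hd.
  have fe : f != e.
    apply/eqP => fe; move: uw2; rewrite cat_uniq /= => /and3P[_ + _].
    by rewrite negb_or -fe fu.
  have fw1 : f \in w1.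
    have : f \in e :: w1 by rewrite (perm_mem hp) mem_cat fu.
    by rewrite inE (negbTE fe).
  have h1 : R1 e f by exact: (allP hR1e).
  have h2 : R2 e f by apply: hagr; rewrite ?inE ?eqxx ?fw1 ?orbT.
  have h3 : R2 f e.
    by move/allrelP: hal => /(_ f e fu); rewrite inE eqxx => /(_ isT).
  exact: hasym h2 h3.
rewrite /gev foldl_cat /= -/(gev _ _ _ u X) -/(gev _ _ _ v _).
rewrite move_through // -gev_cat.
apply: IH => //.
- rewrite pairwise_cat; apply/and3P; split => //.
  by apply/allrelP => x y xu yv; move/allrelP: hal; apply => //; rewrite inE yv orbT.
- move=> a b aw bw; apply: hagr; by rewrite inE ?aw ?bw orbT.
Qed.

Local Close Scope ring_scope.

Lemma foldl_ext {A B} (f g : A -> B -> A) x s :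
  (forall y z, f y z = g y z) -> foldl f x s = foldl g x s.
Proof. by move=> h; elim: s x => //= z s IH x; rewrite h IH. Qed.

Lemma gev_flatten {T A} fa fd g (f : A -> seq (nat * nat * nat)) s (X : nat -> nat -> T) :
  gev fa fd g (flatten (map f s)) X = foldl (fun Y x => gev fa fd g (f x) Y) X s.
Proof. by elim: s X => //= x s IH X; rewrite gev_cat IH. Qed.

Lemma gev_row {T} fa fd g r k s (X : nat -> nat -> T) :
  gev fa fd g [seq (r, c, k) | c <- s] X = foldl (fun Y c => gmove fa fd g r c Y) X s.
Proof. by elim: s X => //= x s IH X; rewrite -IH. Qed.

Definition wT (n : nat) : seq (nat * nat * nat) :=
  flatten [seq flatten [seq [seq (i - k, c, k) | c <- iota 1 (n - k)]
                       | k <- iota 0 (minn i n)] | i <- iota 1 n].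

Definition lfa {R : realType} (a b c d : R) := (b * c / (a * b + a * c))%R.
Definition lfd {R : realType} (a b c d : R) := (d * (b + c))%R.
Definition lg {R : realType} (x y : R) := (x * y)%R.

Lemma lmoveE {R : realType} i j (X : nat -> nat -> R) :
  lmove i j X = gmove lfa lfd lg i j X.
Proof. by []. Qed.

Lemma gRSK_wT {R : realType} n (X : nat -> nat -> R) :
  gRSK n n X = gev lfa lfd lg (wT n) X.
Proof.
rewrite /gRSK /wT gev_flatten; apply: foldl_ext => Y i.
rewrite /growR gev_flatten; apply: foldl_ext => Z k.
by rewrite /gpi gev_row; apply: foldl_ext => U c; rewrite lmoveE.
Qed.

Definition evc (n : nat) (e : nat * nat * nat) : bool :=
  let: (r, c, m) := e in [&& 1 <= r, 1 <= c, r + m <= n & c + m <= n].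

Lemma memT n e : (e \in wT n) = evc n e.
Proof.
case: e => [[r c] m] /=; apply/idP/idP.
  case/flattenP => s1 /mapP[i]; rewrite mem_iota => hi ->.
  case/flattenP => s2 /mapP[k]; rewrite mem_iota => hk ->.
  case/mapP => c'; rewrite mem_iota => hc [-> -> ->]; lia.
move=> h; apply/flattenP; exists (flatten [seq [seq (r + m - k, c0, k) | c0 <- iota 1 (n - k)]
                       | k <- iota 0 (minn (r + m) n)]).
  apply/mapP; exists (r + m) => //; rewrite mem_iota; lia.
apply/flattenP; exists [seq (r + m - m, c0, m) | c0 <- iota 1 (n - m)].
  apply/mapP; exists m => //; rewrite mem_iota; lia.
apply/mapP; exists c; first by rewrite mem_iota; lia.
by congr (_, _, _); lia.
Qed.

Definition ltT (e f : nat * nat * nat) : bool :=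
  let: (r, c, m) := e in let: (r', c', m') := f in
  (r + m < r' + m') || (r + m == r' + m') && ((m < m') || (m == m') && (c < c')).

Lemma pw_flat {A B : eqType} (R : rel B) (P : rel A) (f : A -> seq B) s :
  pairwise P s -> (forall x y, x \in s -> y \in s -> P x y -> forall a b, a \in f x -> b \in f y -> R a b) ->
  (forall x, x \in s -> pairwise R (f x)) -> pairwise R (flatten (map f s)).
Proof.
elim: s => //= x s IH /andP[hx hs] hP hf.
rewrite pairwise_cat hf ?mem_head // IH // ?andbT.
- apply/allrelP => a b ax /flattenP[s1 /mapP[y ys ->] bfy].
  by apply: (hP x y) => //; rewrite ?inE ?ys ?eqxx ?orbT //; apply: (allP hx).
- by move=> y z ys zs; apply: hP; rewrite inE ?ys ?zs orbT.
- by move=> y ys; apply: hf; rewrite inE ys orbT.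
Qed.

Lemma pw_iota a b : pairwise ltn (iota a b).
Proof. by rewrite -sorted_pairwise ?iota_ltn_sorted //; exact: ltn_trans. Qed.

Lemma pw_wT n : pairwise ltT (wT n).
Proof.
apply: (@pw_flat _ _ _ ltn); first exact: pw_iota.
  move=> i i' _ _ hii' a b /flattenP[s1 /mapP[k]]; rewrite mem_iota => hk -> /mapP[c hc ->].
  move=> /flattenP[s2 /mapP[k']]; rewrite mem_iota => hk' -> /mapP[c' hc' ->] /=; lia.
move=> i _; apply: (@pw_flat _ _ _ ltn); first exact: pw_iota.
  move=> k k' _ _ hkk' a b /mapP[c]; rewrite mem_iota => hc -> /mapP[c']; rewrite mem_iota => hc' -> /=.
  lia.
move=> k; rewrite mem_iota => hk; rewrite pairwise_map.
apply: sub_pairwise (pw_iota _ _) => x y /= hxy; lia.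
Qed.

Definition B (n : nat) : seq (nat * nat * nat) :=
  flatten [seq flatten [seq [seq (r, s - r, m) | r <- iota 1 n & (r <= s - r) && (s - r + m <= n)]
                       | s <- iota 2 (2 * n)] | m <- iota 0 n].

Definition blk (d : nat * nat * nat) : seq (nat * nat * nat) :=
  let: (r, c, m) := d in if r == c then [:: (r, r, m)] else [:: (r, c, m); (c, r, m)].

Definition Sw (n : nat) := flatten (map blk (B n)).

Definition ltB (e f : nat * nat * nat) : bool :=
  let: (r, c, m) := e in let: (r', c', m') := f in
  (m < m') || (m == m') && ((r + c < r' + c') || (r + c == r' + c') && (r < r')).

Definition ltS (e f : nat * nat * nat) : bool :=
  let: (r, c, m) := e in let: (r', c', m') := f in
  (m < m') || (m == m') && ((r + c < r' + c') || (r + c == r' + c') &&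
     ((minn r c < minn r' c') || (minn r c == minn r' c') && (~~ (c < r) && (c' < r')))).

Lemma memB n d : (d \in B n) = let: (r, c, m) := d in [&& 1 <= r, r <= c & c + m <= n].
Proof.
case: d => [[r c] m] /=; apply/idP/idP.
  case/flattenP => s1 /mapP[m']; rewrite mem_iota => hm ->.
  case/flattenP => s2 /mapP[s]; rewrite mem_iota => hs ->.
  case/mapP => r'; rewrite mem_filter mem_iota => /andP[hc hr] [-> -> ->]; lia.
move=> h; apply/flattenP; eexists.
  apply/mapP; exists m => //; rewrite mem_iota; lia.
apply/flattenP; eexists.
  apply/mapP; exists (r + c) => //; rewrite mem_iota; lia.
apply/mapP; exists r; first by rewrite mem_filter mem_iota; lia.
by congr (_, _, _); lia.
Qed.

Lemma memS n e : (e \in Sw n) = evc n e.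
Proof.
case: e => [[r c] m] /=; apply/idP/idP.
  case/flattenP => s1 /mapP[[[r' c'] m']]; rewrite memB => hd ->.
  rewrite /blk; case: ifP => hrc; rewrite !inE ?xpair_eqE; lia.
move=> h; apply/flattenP.
exists (blk (minn r c, maxn r c, m)).
  by apply/mapP; exists (minn r c, maxn r c, m) => //; rewrite memB; lia.
rewrite /blk; case: ifP => hrc; rewrite !inE ?xpair_eqE; lia.
Qed.

Lemma pw_B n : pairwise ltB (B n).
Proof.
apply: (@pw_flat _ _ _ ltn); first exact: pw_iota.
  move=> i i' _ _ hii' a b /flattenP[s1 /mapP[k]]; rewrite mem_iota => hk -> /mapP[c].
  rewrite mem_filter mem_iota => hc ->.
  move=> /flattenP[s2 /mapP[k']]; rewrite mem_iota => hk' -> /mapP[c'].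
  rewrite mem_filter mem_iota => hc' -> /=; lia.
move=> i _; apply: (@pw_flat _ _ _ ltn); first exact: pw_iota.
  move=> k k' _ _ hkk' a b /mapP[c]; rewrite mem_filter mem_iota => hc -> /mapP[c'].
  rewrite mem_filter mem_iota => hc' -> /=; lia.
move=> k; rewrite mem_iota => hk; rewrite pairwise_map.
apply: pairwise_filter; apply: sub_pairwise (pw_iota _ _) => x y /= hxy; lia.
Qed.

Lemma pw_S n : pairwise ltS (Sw n).
Proof.
apply: (@pw_flat _ _ _ ltB); first exact: pw_B.
  move=> [[r c] m] [[r' c'] m']; rewrite !memB => hd hd' hl [[ar ac] am] [[br bc] bm].
  rewrite /blk; case: ifP => h1; case: ifP => h2; rewrite !inE !xpair_eqE /=; move: hl => /=; lia.
move=> [[r c] m]; rewrite memB => hd /=; case: ifP => //= h; lia.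
Qed.

Lemma agreeTS n e f : evc n e -> evc n f -> dep e.1 f.1 -> ltT e f -> ltS e f.
Proof. case: e => [[r c] m]; case: f => [[r' c'] m'] /=; lia. Qed.

Lemma ltS_asym e f : ltS e f -> ltS f e -> False.
Proof. case: e => [[r c] m]; case: f => [[r' c'] m'] /=; lia. Qed.

Lemma uniq_wT n : uniq (wT n).
Proof. apply: (pairwise_uniq _ (pw_wT n)) => [[[r c] m]] /=; lia. Qed.

Lemma uniq_S n : uniq (Sw n).
Proof. apply: (pairwise_uniq _ (pw_S n)) => [[[r c] m]] /=; lia. Qed.

Lemma wT_S {T} fa fd g n (X : nat -> nat -> T) :
  gev fa fd g (wT n) X = gev fa fd g (Sw n) X.
Proof.
apply: (reorder _ _ _ ltT ltS).
- apply/allP => [[[r c] m]]; rewrite memT /inr1 /=; lia.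
- exact: uniq_wT.
- by apply: uniq_perm; [exact: uniq_wT|exact: uniq_S|move=> e; rewrite memT memS].
- exact: pw_wT.
- exact: pw_S.
- by move=> e f; rewrite !memT; apply: agreeTS.
- exact: ltS_asym.
Qed.

Lemma gev_S {T} fa fd g n (X : nat -> nat -> T) :
  gev fa fd g (Sw n) X = foldl (fun Y d => gev fa fd g (blk d) Y) X (B n).
Proof. by rewrite /Sw gev_flatten. Qed.

Local Open Scope ring_scope.

Section Der.
End Der.

Lemma dM {R : realType} {f g : R -> R} {x df dg : R} :
  is_derive x (1:R) f df -> is_derive x (1:R) g dg ->
  is_derive x (1:R) (fun t => f t * g t) (f x * dg + g x * df).
Proof. by move=> hf hg; have := is_deriveM hf hg. Qed.

Lemma dD {R : realType} {f g : R -> R} {x df dg : R} :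
  is_derive x (1:R) f df -> is_derive x (1:R) g dg ->
  is_derive x (1:R) (fun t => f t + g t) (df + dg).
Proof. by move=> hf hg; have := is_deriveD hf hg. Qed.

Lemma dV {R : realType} {f : R -> R} {x df : R} :
  f x != 0 -> is_derive x (1:R) f df ->
  is_derive x (1:R) (fun t => (f t)^-1) (- (f x)^-2 * df).
Proof. by move=> hf0 hf; have := is_deriveV hf0 hf. Qed.

Lemma dcst {R : realType} (a x : R) : is_derive x (1:R) (fun _ => a) 0.
Proof. exact: is_derive_cst. Qed.

Lemma dexp {R : realType} (a x : R) : is_derive x (1:R) (fun t => a * expR t) (a * expR x).
Proof.
have := dM (dcst a x) (is_derive_expR x).
by rewrite mulr0 addr0.
Qed.

Lemma dln {R : realType} {f : R -> R} {x df : R} :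
  0 < f x -> is_derive x (1:R) f df -> is_derive x (1:R) (fun t => ln (f t)) ((f x)^-1 * df).
Proof.
move=> hp hf; have h1 := is_derive1_ln hp.
by have := is_derive1_comp h1 hf.
Qed.

Lemma d_lfa {R : realType} (a b c d : R -> R) (xa xb xc xd va vb vc vd : R) :
  a 0 = xa -> b 0 = xb -> c 0 = xc -> 0 < xa -> 0 < xb -> 0 < xc ->
  is_derive (0:R) (1:R) a (xa * va) -> is_derive (0:R) (1:R) b (xb * vb) -> is_derive (0:R) (1:R) c (xc * vc) ->
  is_derive (0:R) (1:R) (fun t => lfa (a t) (b t) (c t) (d t))
    (lfa xa xb xc xd * (vb + vc - va - (xb * vb + xc * vc) / (xb + xc))).
Proof.
move=> ea eb ec pa pb pc ha hb hc.
have hden : a 0 * b 0 + a 0 * c 0 != 0.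
  by rewrite ea eb ec; apply: lt0r_neq0; apply: addr_gt0; apply: mulr_gt0.
have HH := (dM (dM hb hc) (@dV _ (fun t => a t * b t + a t * c t) _ _ hden (dD (dM ha hb) (dM ha hc)))).
apply: (is_derive_eq HH).
rewrite /lfa ea eb ec.
have hxb : xb != 0 by apply: lt0r_neq0.
have hxc : xc != 0 by apply: lt0r_neq0.
have hxa : xa != 0 by apply: lt0r_neq0.
have hbc : xb + xc != 0 by apply: lt0r_neq0; apply: addr_gt0.
have hd2 : xa * xb + xa * xc != 0 by apply: lt0r_neq0; apply: addr_gt0; apply: mulr_gt0.
field.
by rewrite hbc hd2.
Qed.

Lemma d_lfd {R : realType} (a b c d : R -> R) (xa xb xc xd va vb vc vd : R) :
  b 0 = xb -> c 0 = xc -> d 0 = xd -> 0 < xb -> 0 < xc -> 0 < xd ->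
  is_derive (0:R) (1:R) b (xb * vb) -> is_derive (0:R) (1:R) c (xc * vc) ->
  is_derive (0:R) (1:R) d (xd * vd) ->
  is_derive (0:R) (1:R) (fun t => lfd (a t) (b t) (c t) (d t))
    (lfd xa xb xc xd * (vd + (xb * vb + xc * vc) / (xb + xc))).
Proof.
move=> eb ec ed pb pc pd hb hc hd.
have HH := dM hd (dD hb hc).
apply: (is_derive_eq HH).
rewrite /lfd eb ec ed.
have hbc : xb + xc != 0 by apply: lt0r_neq0; apply: addr_gt0.
field.
by rewrite hbc.
Qed.

Lemma d_lg {R : realType} (a b : R -> R) (xa xb va vb : R) :
  a 0 = xa -> b 0 = xb ->
  is_derive (0:R) (1:R) a (xa * va) -> is_derive (0:R) (1:R) b (xb * vb) ->
  is_derive (0:R) (1:R) (fun t => lg (a t) (b t)) (lg xa xb * (va + vb)).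
Proof.
move=> ea eb ha hb.
have HH := dM ha hb.
apply: (is_derive_eq HH).
rewrite /lg ea eb; ring.
Qed.

Lemma gval_a {T} fa fd g i j (X : nat -> nat -> T) : (2 <= i)%N -> (2 <= j)%N ->
  gmove fa fd g i j X i.-1 j.-1 = fa (X i.-1 j.-1) (X i.-1 j) (X i j.-1) (X i j).
Proof. by move=> hi hj; rewrite /gmove /upd; repeat (case: ifP => //= ?; try lia). Qed.

Lemma gval_d {T} fa fd g i j (X : nat -> nat -> T) : (2 <= i)%N -> (2 <= j)%N ->
  gmove fa fd g i j X i j = fd (X i.-1 j.-1) (X i.-1 j) (X i j.-1) (X i j).
Proof. by move=> hi hj; rewrite /gmove /upd; repeat (case: ifP => //= ?; try lia). Qed.

Lemma gval_r {T} fa fd g i (X : nat -> nat -> T) : (2 <= i)%N ->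
  gmove fa fd g i 1 X i 1 = g (X i.-1 1%N) (X i 1%N).
Proof. by move=> hi; rewrite /gmove /upd; repeat (case: ifP => //= ?; try lia). Qed.

Lemma gval_c {T} fa fd g j (X : nat -> nat -> T) : (2 <= j)%N ->
  gmove fa fd g 1 j X 1 j = g (X 1%N j.-1) (X 1%N j).
Proof. by move=> hj; rewrite /gmove /upd; repeat (case: ifP => //= ?; try lia). Qed.

Definition faD {R : realType} (a b c d : R * R) : R * R :=
  (lfa a.1 b.1 c.1 d.1, b.2 + c.2 - a.2 - (b.1 * b.2 + c.1 * c.2) / (b.1 + c.1)).
Definition fdD {R : realType} (a b c d : R * R) : R * R :=
  (lfd a.1 b.1 c.1 d.1, d.2 + (b.1 * b.2 + c.1 * c.2) / (b.1 + c.1)).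
Definition gD {R : realType} (x y : R * R) : R * R := (lg x.1 y.1, x.2 + y.2).

Notation dmove := (gmove faD fdD gD).
Notation rmove := (gmove lfa lfd lg).

Definition fstM {A B} (Z : nat -> nat -> A * B) := fun p q => (Z p q).1.
Definition sndM {A B} (Z : nat -> nat -> A * B) := fun p q => (Z p q).2.

Lemma fst_dmove {R : realType} i j (Z : nat -> nat -> R * R) :
  fstM (dmove i j Z) = rmove i j (fstM Z).
Proof.
by apply/funext => p; apply/funext => q; rewrite /fstM /gmove /upd; repeat case: ifP => //.
Qed.

Definition Inv {R : realType} n (F : R -> nat -> nat -> R) (Z : nat -> nat -> R * R) :=
  forall p q, (1 <= p <= n)%N -> (1 <= q <= n)%N ->
  [/\ F 0 p q = (Z p q).1, 0 < (Z p q).1 &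
      is_derive (0:R) (1:R) (fun t => F t p q) ((Z p q).1 * (Z p q).2)].

Lemma Inv_step {R : realType} n (F : R -> nat -> nat -> R) Z i j :
  Inv n F Z -> (1 <= i <= n)%N -> (1 <= j <= n)%N ->
  Inv n (fun t => rmove i j (F t)) (dmove i j Z).
Proof.
move=> hI hi hj p q hp hq.
case hw: (wr i j p q); last first.
  have -> : (fun t => rmove i j (F t) p q) = (fun t => F t p q).
    by apply/funext => t; rewrite gframe ?hw //; lia.
  by rewrite !gframe ?hw //; try lia; apply: hI.
move: hw; rewrite /wr.
have [ei|ni] := eqVneq i 1%N; have [ej|nj] := eqVneq j 1%N;
  rewrite ?ei ?ej ?(negbTE ni) ?(negbTE nj) ?eqxx //=.
- move=> /andP[/eqP ep /eqP eq]; subst p q.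
  have hj2 : (2 <= j)%N by lia.
  have -> : (fun t => rmove 1 j (F t) 1%N j) = (fun t => lg (F t 1%N j.-1) (F t 1%N j)).
    by apply/funext => t; rewrite gval_c.
  rewrite !gval_c //.
  have [e1 p1 d1] := hI 1%N j.-1 ltac:(lia) ltac:(lia).
  have [e2 p2 d2] := hI 1%N j ltac:(lia) ltac:(lia).
  split => /=.
  + by rewrite /lg e1 e2.
  + by rewrite /lg; apply: mulr_gt0.
  + exact: d_lg.
- move=> /andP[/eqP ep /eqP eq]; subst p q.
  have hi2 : (2 <= i)%N by lia.
  have -> : (fun t => rmove i 1 (F t) i 1%N) = (fun t => lg (F t i.-1 1%N) (F t i 1%N)).
    by apply/funext => t; rewrite gval_r.
  rewrite !gval_r //.
  have [e1 p1 d1] := hI i.-1 1%N ltac:(lia) ltac:(lia).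
  have [e2 p2 d2] := hI i 1%N ltac:(lia) ltac:(lia).
  split => /=.
  + by rewrite /lg e1 e2.
  + by rewrite /lg; apply: mulr_gt0.
  + exact: d_lg.
- have hi2 : (2 <= i)%N by lia.
  have hj2 : (2 <= j)%N by lia.
  have [ea pa da] := hI i.-1 j.-1 ltac:(lia) ltac:(lia).
  have [eb pb db] := hI i.-1 j ltac:(lia) ltac:(lia).
  have [ec pc dc] := hI i j.-1 ltac:(lia) ltac:(lia).
  have [ed pd dd] := hI i j ltac:(lia) ltac:(lia).
  case/orP => /andP[/eqP ep /eqP eq]; subst p q.
  + have -> : (fun t => rmove i j (F t) i.-1 j.-1) =
        (fun t => lfa (F t i.-1 j.-1) (F t i.-1 j) (F t i j.-1) (F t i j)).
      by apply/funext => t; rewrite gval_a.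
    rewrite !gval_a //.
    split => /=.
    * by rewrite /lfa ea eb ec.
    * rewrite /lfa; apply: divr_gt0; first exact: mulr_gt0.
      by apply: addr_gt0; apply: mulr_gt0.
    * exact: (d_lfa (fun t => F t i.-1 j.-1) (fun t => F t i.-1 j) (fun t => F t i j.-1) (fun t => F t i j) _ _ _ (Z i j).1 _ _ _ (Z i j).2 ea eb ec pa pb pc da db dc).
  + have -> : (fun t => rmove i j (F t) i j) =
        (fun t => lfd (F t i.-1 j.-1) (F t i.-1 j) (F t i j.-1) (F t i j)).
      by apply/funext => t; rewrite gval_d.
    rewrite !gval_d //.
    split => /=.
    * by rewrite /lfd eb ec ed.
    * by rewrite /lfd; apply: mulr_gt0 => //; apply: addr_gt0.
    * exact: (d_lfd (fun t => F t i.-1 j.-1) (fun t => F t i.-1 j) (fun t => F t i j.-1) (fun t => F t i j) (Z i.-1 j.-1).1 _ _ _ (Z i.-1 j.-1).2 _ _ _ eb ec ed pb pc pd db dc dd).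
Qed.

Definition inrn (n : nat) (e : nat * nat * nat) :=
  (1 <= e.1.1 <= n)%N && (1 <= e.1.2 <= n)%N.

Lemma Inv_gev {R : realType} n w (F : R -> nat -> nat -> R) Z :
  Inv n F Z -> all (inrn n) w ->
  Inv n (fun t => gev lfa lfd lg w (F t)) (gev faD fdD gD w Z).
Proof.
elim: w F Z => //= e w IH F Z hI /andP[he hw].
apply: (IH (fun t => rmove e.1.1 e.1.2 (F t))) => //.
by case/andP: he => ??; apply: Inv_step.
Qed.

Lemma fst_gev {R : realType} w (Z : nat -> nat -> R * R) :
  fstM (gev faD fdD gD w Z) = gev lfa lfd lg w (fstM Z).
Proof. by elim: w Z => //= e w IH Z; rewrite IH fst_dmove. Qed.

Definition indv {n : nat} (b : UT n) : nat -> nat -> int :=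
  fun p q => if ((p == (val b).1.+1) && (q == (val b).2.+1))
       || ((p == (val b).2.+1) && (q == (val b).1.+1)) then 1%R else 0%R.

Definition Z0 {R : realType} {n : nat} (W : nat -> nat -> R) (b : UT n) : nat -> nat -> R * R :=
  fun p q => (W p q, (indv b p q)%:~R).

Lemma pert0 {R : realType} {n : nat} (W : nat -> nat -> R) (b : UT n) : pert W b 0 = W.
Proof.
apply/funext => p; apply/funext => q; rewrite /pert expR0 mulr1; by case: ifP.
Qed.

Lemma Inv0 {R : realType} (n : nat) (W : nat -> nat -> R) (b : UT n) :
  (forall i j, (1 <= i <= n)%N -> (1 <= j <= n)%N -> 0 < W i j) ->
  Inv n (pert W b) (Z0 W b).
Proof.
move=> hW p q hp hq; rewrite /Z0 /=; split.
- by rewrite pert0.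
- exact: hW.
- rewrite /pert /indv; case: ifP => _.
    by have := dexp (W p q) (0:R); rewrite expR0 mulr1.
  by rewrite mulr0; apply: dcst.
Qed.

Lemma det_split {R : comUnitRingType} K (M : 'M[R]_K) (A : pred 'I_K) :
  (forall x y, x != y -> M x y != 0 -> A x && ~~ A y) ->
  \det M = \prod_x M x x.
Proof.
move=> hM; rewrite /determinant (bigD1 (1%g : 'S_K)) //= [X in _ + X]big1 ?addr0.
    by rewrite odd_perm1 expr0 mul1r; apply: eq_bigr => i _; rewrite perm1.
move=> s hs.
have [i0 hi0] : exists i, s i != i.
  apply/existsP; apply: contraR hs; rewrite negb_exists => /forallP h.
  by apply/eqP/permP => i; rewrite perm1; apply/eqP; move: (h i); rewrite negbK.
have hz : exists i, M i (s i) = 0.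
  case h: (M i0 (s i0) == 0); first by exists i0; apply/eqP.
  have /andP[hA hnA] := hM i0 (s i0) ltac:(by rewrite eq_sym) (negbT h).
  case h2: (M (s i0) (s (s i0)) == 0); first by exists (s i0); apply/eqP.
  have hsi : s i0 != s (s i0).
    by apply: contra hi0 => /eqP /perm_inj <-.
  by have := hM _ _ hsi (negbT h2); rewrite (negbTE hnA).
case: hz => i hi; rewrite (bigD1 i) //= hi mul0r mulr0 //.
Qed.

Lemma blk_sym {T} fa fd g (d : nat * nat * nat) (Y : nat -> nat -> T) :
  (forall a b c d, fa a b c d = fa a c b d) ->
  (forall a b c d, fd a b c d = fd a c b d) ->
  (1 <= d.1.1 <= d.1.2)%N -> tr Y = Y ->
  tr (gev fa fd g (blk d) Y) = gev fa fd g (blk d) Y.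
Proof.
case: d => [[r c] m] /= hfa hfd hrc hY.
rewrite /blk; case: ifP => [_|hne]; rewrite /gev /=.
  by rewrite -gtr // hY.
rewrite -gtr // -gtr // hY gcomm //; try lia.
rewrite /dep; lia.
Qed.

Definition zipM {A B} (Y : nat -> nat -> A) (v : nat -> nat -> B) : nat -> nat -> A * B :=
  fun p q => (Y p q, v p q).

Lemma zip_fs {A B} (Z : nat -> nat -> A * B) : zipM (fstM Z) (sndM Z) = Z.
Proof. by apply/funext => p; apply/funext => q; rewrite /zipM /fstM /sndM; case: (Z p q). Qed.

Lemma sym_fs {A B} (Z : nat -> nat -> A * B) : tr Z = Z -> tr (fstM Z) = fstM Z /\ tr (sndM Z) = sndM Z.
Proof.
move=> h; split; apply/funext => p; apply/funext => q; rewrite /tr /fstM /sndM;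
  by have := congr1 (fun F => F p q) h; rewrite /tr => ->.
Qed.

Lemma sym_zip {A B} (Y : nat -> nat -> A) (v : nat -> nat -> B) : tr Y = Y -> tr v = v -> tr (zipM Y v) = zipM Y v.
Proof.
move=> hY hv; apply/funext => p; apply/funext => q; rewrite /tr /zipM.
have := congr1 (fun F => F p q) hY; have := congr1 (fun F => F p q) hv; rewrite /tr => -> ->.
by [].
Qed.

Lemma faD_sym {R : realType} (a b c d : R * R) : faD a b c d = faD a c b d.
Proof. rewrite /faD /lfa; congr (_, _); first by rewrite [b.1 * c.1]mulrC [a.1 * b.1 + _]addrC.
by rewrite (addrC b.2) (addrC (b.1 * b.2)) (addrC b.1). Qed.

Lemma fdD_sym {R : realType} (a b c d : R * R) : fdD a b c d = fdD a c b d.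
Proof. rewrite /fdD /lfd; congr (_, _); first by rewrite (addrC b.1).
by rewrite (addrC (b.1 * b.2)) (addrC b.1). Qed.

Lemma lfa_sym {R : realType} (a b c d : R) : lfa a b c d = lfa a c b d.
Proof. by rewrite /lfa [b * c]mulrC [a * b + _]addrC. Qed.

Lemma lfd_sym {R : realType} (a b c d : R) : lfd a b c d = lfd a c b d.
Proof. by rewrite /lfd addrC. Qed.

Definition Lw {R : realType} w (Y v : nat -> nat -> R) := sndM (gev faD fdD gD w (zipM Y v)).

Lemma fst_zip {A B} (Y : nat -> nat -> A) (v : nat -> nat -> B) : fstM (zipM Y v) = Y.
Proof. by []. Qed.

Definition lmv {R : realType} i j (Y v : nat -> nat -> R) := sndM (dmove i j (zipM Y v)).

Lemma dmove_zip {R : realType} i j (Y v : nat -> nat -> R) :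
  dmove i j (zipM Y v) = zipM (rmove i j Y) (lmv i j Y v).
Proof. by rewrite -{1}(zip_fs (dmove i j (zipM Y v))) fst_dmove fst_zip. Qed.

Lemma lin1 {R : realType} i j (Y v1 v2 : nat -> nat -> R) (k : R) :
  lmv i j Y (fun p q => v1 p q + k * v2 p q) =
  (fun p q => lmv i j Y v1 p q + k * lmv i j Y v2 p q).
Proof.
apply/funext => p; apply/funext => q; rewrite /lmv /sndM /gmove /upd /zipM.
case: ifP => _ //=.
case: ifP => _ //=.
  case: ifP => _ //=; ring.
case: ifP => _ //=.
  case: ifP => _ //=; ring.
case: ifP => _ //=.
  rewrite /fdD /=; ring.
case: ifP => _ //=.
rewrite /faD /=; ring.
Qed.

Lemma linw {R : realType} w (Y v1 v2 : nat -> nat -> R) (k : R) :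
  Lw w Y (fun p q => v1 p q + k * v2 p q) =
  (fun p q => Lw w Y v1 p q + k * Lw w Y v2 p q).
Proof.
rewrite /Lw; elim: w Y v1 v2 => [|e w IH] Y v1 v2 //=.
by rewrite !dmove_zip lin1 IH.
Qed.

Lemma lin0 {R : realType} w (Y : nat -> nat -> R) :
  Lw w Y (fun _ _ => 0) = (fun _ _ => 0).
Proof.
have := linw w Y (fun _ _ => 0) (fun _ _ => 0) 1.
have -> : (fun _ _ : nat => 0 + 1 * 0 : R) = (fun _ _ => 0) by rewrite mul1r addr0.
move=> h; apply/funext => p; apply/funext => q.
have := congr1 (fun F => F p q) h => /=; rewrite mul1r => ha; lra.
Qed.

Lemma linsum {R : realType} {I} w (Y : nat -> nat -> R) (s : seq I) (c : I -> R) f :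
  Lw w Y (fun p q => \sum_(y <- s) c y * f y p q) =
  (fun p q => \sum_(y <- s) c y * Lw w Y (f y) p q).
Proof.
elim: s => [|x s IH].
  have -> : (fun p q : nat => \sum_(y <- [::]) c y * f y p q) = (fun _ _ => 0 : R).
    by apply/funext => p; apply/funext => q; rewrite big_nil.
  by rewrite lin0; apply/funext => p; apply/funext => q; rewrite big_nil.
have -> : (fun p q => \sum_(y <- x :: s) c y * f y p q) =
          (fun p q => \sum_(y <- s) c y * f y p q + c x * f x p q).
  by apply/funext => p; apply/funext => q; rewrite big_cons addrC.
rewrite linw IH; apply/funext => p; apply/funext => q; by rewrite big_cons addrC.
Qed.

Lemma gev_agree {T} fa fd g n w (X Y : nat -> nat -> T) :
  all (inrn n) w -> agree n X Y -> agree n (gev fa fd g w X) (gev fa fd g w Y).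
Proof.
elim: w X Y => //= e w IH X Y /andP[he hw] h; apply: IH => //.
by case/andP: he => ??; apply: gagree.
Qed.

Lemma Lw_agree {R : realType} n w (Y v v' : nat -> nat -> R) :
  all (inrn n) w -> agree n v v' -> agree n (Lw w Y v) (Lw w Y v').
Proof.
move=> hw h p q hp hq; rewrite /Lw /sndM.
have hz : agree n (zipM Y v) (zipM Y v') by move=> p' q' hp' hq'; rewrite /zipM h.
by rewrite (gev_agree faD fdD gD n w (zipM Y v) (zipM Y v') hw hz p q hp hq).
Qed.

Definition ev {n : nat} (x : 'I_#|{: UT n}|) : UT n := @enum_val _ (mem {: UT n}) x.
Definition cp {n} (y : UT n) : nat := ((val y).1).+1.
Definition cq {n} (y : UT n) : nat := ((val y).2).+1.
Definition indR {R : realType} {n} (y : UT n) : nat -> nat -> R := fun p q => (indv y p q)%:~R.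

Lemma cpq {n} (y : UT n) : [/\ (1 <= cp y)%N, (cp y <= cq y)%N & (cq y <= n)%N].
Proof.
rewrite /cp /cq; case: y => [[a b] hab] /=; move: hab => /= hab.
by have := ltn_ord b; split; lia.
Qed.

Lemma ev_inj n : injective (@ev n).
Proof. exact: enum_val_inj. Qed.

Lemma UT_eq {n} (y z : UT n) : cp y = cp z -> cq y = cq z -> y = z.
Proof.
rewrite /cp /cq; case: y => [[a b] h]; case: z => [[a' b'] h'] /= e1 e2.
apply: val_inj => /=; congr (_, _); apply: val_inj => /=; lia.
Qed.

Lemma sample {R : realType} n (v : nat -> nat -> R) : tr v = v ->
  agree n v (fun p q => \sum_(y < #|{: UT n}|) v (cp (ev y)) (cq (ev y)) * indR (ev y) p q).
Proof.
move=> hv p q hp hq.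
have ha : ((minn p q).-1 < n)%N by lia.
have hb : ((maxn p q).-1 < n)%N by lia.
have hab : ((Ordinal ha, Ordinal hb).1 <= (Ordinal ha, Ordinal hb).2)%N by rewrite /=; lia.
pose u : UT n := exist _ (Ordinal ha, Ordinal hb) hab.
have hu : ev (enum_rank u) = u by rewrite /ev enum_rankK.
rewrite (bigD1 (enum_rank u)) //= big1 ?addr0.
  rewrite hu /indR /indv /cp /cq /=.
  have -> : ((minn p q).-1.+1 = minn p q)%N by lia.
  have -> : ((maxn p q).-1.+1 = maxn p q)%N by lia.
  case: ifP => h; last by lia.
  rewrite mulr1; case: (leqP p q) => hpq.
    by [].
  by have := congr1 (fun F => F p q) hv; rewrite /tr => ->.
move=> y hy; rewrite /indR /indv; case: ifP => h; last by rewrite mulr0.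
exfalso; move/negP: hy; apply; apply/eqP.
apply: (ev_inj n); rewrite hu; move: h; case: (ev y) => [[a0 b0] hab0] /= h.
simpl in hab0; apply: UT_eq; rewrite /cp /cq /=; lia.
Qed.

Definition PV {R : realType} n (v : nat -> nat -> R) : 'cV[R]_#|{: UT n}| :=
  \col_x v (cp (@ev n x)) (cq (@ev n x)).

Definition Mblk {R : realType} n d (Y : nat -> nat -> R) : 'M[R]_#|{: UT n}| :=
  \matrix_(x, y) Lw (blk d) Y (indR (@ev n y)) (cp (@ev n x)) (cq (@ev n x)).

Definition dok (n : nat) (d : nat * nat * nat) := (1 <= d.1.1 <= d.1.2)%N && (d.1.2 <= n)%N.

Lemma blk_inrn n d : dok n d -> all (inrn n) (blk d).
Proof.
case: d => [[r c] m]; rewrite /dok /blk /inrn /= => h.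
by case: ifP => _ /=; rewrite ?andbT; apply/andP; split => //; lia.
Qed.

Lemma PV_blk {R : realType} n d (Y v : nat -> nat -> R) :
  dok n d -> tr v = v -> PV n (Lw (blk d) Y v) = Mblk n d Y *m PV n v.
Proof.
move=> hd hv; apply/matrixP => x z; rewrite !mxE.
under eq_bigr do rewrite !mxE.
under eq_bigr do rewrite mulrC.
have := congr1 (fun F => F (cp (ev x)) (cq (ev x)))
  (linsum (blk d) Y (index_enum 'I_#|{: UT n}|) (fun y => v (cp (@ev n y)) (cq (@ev n y))) (fun y => indR (@ev n y))).
move=> /= <-.
have [h1 h2 h3] := cpq (ev x).
have HH := (@Lw_agree R n (blk d) Y v _ (blk_inrn _ _ hd) (sample n v hv)).
by apply: HH; apply/andP; split; lia.
Qed.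

Definition evB {R : realType} ds (Z : nat -> nat -> R * R) :=
  foldl (fun Z d => gev faD fdD gD (blk d) Z) Z ds.

Fixpoint Mprod (R : realType) n ds (Y : nat -> nat -> R) : 'M[R]_#|{: UT n}| :=
  match ds with
  | [::] => 1%:M
  | d :: ds' => Mprod R n ds' (gev lfa lfd lg (blk d) Y) *m Mblk n d Y
  end.
Arguments Mprod {R}.

Lemma gev_zip {R : realType} w (Y v : nat -> nat -> R) :
  gev faD fdD gD w (zipM Y v) = zipM (gev lfa lfd lg w Y) (Lw w Y v).
Proof. by rewrite -{1}(zip_fs (gev faD fdD gD w (zipM Y v))) fst_gev fst_zip. Qed.

Lemma chain {R : realType} n ds (Y v : nat -> nat -> R) :
  all (dok n) ds -> tr Y = Y -> tr v = v ->
  PV n (sndM (evB ds (zipM Y v))) = Mprod n ds Y *m PV n v.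
Proof.
elim: ds Y v => [|d ds IH] Y v /=; first by rewrite mul1mx.
move=> /andP[hd hds] hY hv.
have hd1 : (1 <= d.1.1 <= d.1.2)%N by case/andP: hd.
have hZ := blk_sym faD fdD gD d (zipM Y v) faD_sym fdD_sym hd1 (sym_zip Y v hY hv).
rewrite /evB /= -/(evB ds _) gev_zip.
rewrite gev_zip in hZ.
have [hY' hv'] := sym_fs _ hZ.
rewrite fst_zip in hY'.
have e2 : sndM (zipM (gev lfa lfd lg (blk d) Y) (Lw (blk d) Y v)) = Lw (blk d) Y v by [].
rewrite e2 in hv'.
by rewrite IH // PV_blk // mulmxA.
Qed.

Lemma indRE {R : realType} {n} (y : UT n) p q :
  indR y p q = (if ((p == cp y) && (q == cq y)) || ((p == cq y) && (q == cp y)) then 1 else 0 : R).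
Proof. by rewrite /indR /indv /cp /cq; case: ifP. Qed.

Lemma ind_self {R : realType} {n} (y : UT n) : indR y (cp y) (cq y) = 1 :> R.
Proof. by rewrite indRE !eqxx. Qed.

Lemma ind_other {R : realType} n (x y : 'I_#|{: UT n}|) :
  x != y -> indR (ev y) (cp (ev x)) (cq (ev x)) = 0 :> R.
Proof.
move=> hxy; rewrite indRE; case: ifP => // h.
have [h1 h2 h3] := cpq (ev x); have [h4 h5 h6] := cpq (ev y).
have : ev x = ev y by apply: UT_eq; lia.
by move/ev_inj => e; rewrite e eqxx in hxy.
Qed.

Lemma lmv_frame {R : realType} r c (Y v : nat -> nat -> R) p q :
  (1 <= r)%N -> (1 <= c)%N -> ~~ wr r c p q -> lmv r c Y v p q = v p q.
Proof. by move=> hr hc hw; rewrite /lmv /sndM gframe. Qed.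

Lemma lmv_a {R : realType} r c (Y v : nat -> nat -> R) :
  (2 <= r)%N -> (2 <= c)%N -> lmv r c Y v r.-1 c.-1 =
  v r.-1 c + v r c.-1 - v r.-1 c.-1 - (Y r.-1 c * v r.-1 c + Y r c.-1 * v r c.-1) / (Y r.-1 c + Y r c.-1).
Proof. by move=> hr hc; rewrite /lmv /sndM gval_a. Qed.

Lemma lmv_d {R : realType} r c (Y v : nat -> nat -> R) :
  (2 <= r)%N -> (2 <= c)%N -> lmv r c Y v r c =
  v r c + (Y r.-1 c * v r.-1 c + Y r c.-1 * v r c.-1) / (Y r.-1 c + Y r c.-1).
Proof. by move=> hr hc; rewrite /lmv /sndM gval_d. Qed.

Lemma lmv_c {R : realType} c (Y v : nat -> nat -> R) :
  (2 <= c)%N -> lmv 1 c Y v 1 c = v 1%N c.-1 + v 1%N c.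
Proof. by move=> hc; rewrite /lmv /sndM gval_c. Qed.

Lemma Mblk_entry {R : realType} n r c m (Y : nat -> nat -> R) x y :
  dok n (r, c, m) ->
  Mblk n (r, c, m) Y x y = lmv r c Y (indR (ev y)) (cp (ev x)) (cq (ev x)).
Proof.
rewrite /dok /= => hd; rewrite mxE /Lw /blk.
case: ifP => [/eqP e|hne]; first by rewrite /gev /= -e.
rewrite /gev /= /sndM gframe; [by []|lia|lia|].
have [h1 h2 h3] := cpq (ev x).
rewrite /wr; by repeat (case: ifP => //= ?); lia.
Qed.

Ltac solve_ifs := rewrite ?indRE; repeat (case: ifP => ? ; try lia).

Lemma pm1_mul {R : realType} (a b : R) : (a = 1 \/ a = -1) -> (b = 1 \/ b = -1) -> (a * b = 1 \/ a * b = -1).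
Proof. by move=> [->|->] [->|->]; rewrite ?mul1r ?mulr1 ?mulrNN ?mulr1; auto. Qed.

Lemma det_blk {R : realType} n d (Y : nat -> nat -> R) :
  dok n d -> \det (Mblk n d Y) = 1 \/ \det (Mblk n d Y) = -1.
Proof.
case: d => [[r c] m] hd.
have hd' := hd; rewrite /dok /= in hd'.
rewrite (det_split _ _ (fun x => wr r c (cp (@ev n x)) (cq (@ev n x)))).
  apply: (big_ind (fun z => z = 1 \/ z = -1)); [by left|exact: pm1_mul|].
  move=> x _; rewrite Mblk_entry //.
  have [h1 h2 h3] := cpq (ev x).
  case hA: (wr r c (cp (ev x)) (cq (ev x))); last first.
    by rewrite lmv_frame ?hA ?ind_self; [left| lia | lia |].
  move: hA; rewrite /wr.
  have [er|nr] := eqVneq r 1%N.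
    subst r; have [ec|nc] := eqVneq c 1%N; first by subst c.
    rewrite /= ?(negbTE nc) => /andP[/eqP e1 /eqP e2]; rewrite e1 e2 lmv_c; last by lia.
    solve_ifs; left; ring.
  have nc : c != 1%N by lia.
  rewrite ?(negbTE nr) ?(negbTE nc) /=.
  case/orP => /andP[/eqP e1 /eqP e2]; rewrite e1 e2.
    rewrite lmv_a; try lia. solve_ifs; right; ring.
  rewrite lmv_d; try lia. solve_ifs; left; ring.
move=> x y hxy; rewrite Mblk_entry //.
have [h1 h2 h3] := cpq (ev x); have [h4 h5 h6] := cpq (ev y).
case hAx: (wr r c (cp (ev x)) (cq (ev x))); last first.
  by rewrite lmv_frame ?hAx ?ind_other ?eqxx //; lia.
case hAy: (wr r c (cp (ev y)) (cq (ev y))) => //=.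
move: hAx hAy; rewrite /wr.
have [er|nr] := eqVneq r 1%N.
  subst r; have [ec|nc] := eqVneq c 1%N; first by subst c.
  rewrite /= ?(negbTE nc) => /andP[/eqP e1 /eqP e2] /andP[/eqP e3 /eqP e4].
  have : ev x = ev y by apply: UT_eq; lia.
  by move/ev_inj => e; rewrite e eqxx in hxy.
have nc : c != 1%N by lia.
rewrite ?(negbTE nr) ?(negbTE nc) /= => hAx hAy.
case: (boolP (cp (ev x) == cp (ev y))) => hc.
  have : ev x = ev y by apply: UT_eq; lia.
  by move/ev_inj => e; rewrite e eqxx in hxy.
case/orP: hAx => /andP[/eqP e1 /eqP e2]; rewrite e1 e2.
  rewrite lmv_a; try lia. solve_ifs. by move=> /eqP h; exfalso; apply: h; ring.
rewrite lmv_d; try lia. solve_ifs. by move=> /eqP h; exfalso; apply: h; ring.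
Qed.

Lemma det_Mprod {R : realType} n ds (Y : nat -> nat -> R) :
  all (dok n) ds -> \det (Mprod n ds Y) = 1 \/ \det (Mprod n ds Y) = -1.
Proof.
elim: ds Y => [|d ds IH] Y /=; first by rewrite det1; left.
move=> /andP[hd hds]; rewrite det_mulmx; apply: pm1_mul; [exact: IH|exact: det_blk].
Qed.

Lemma dok_B n : all (dok n) (B n).
Proof. by apply/allP => [[[r c] m]]; rewrite memB /dok /=; lia. Qed.

Lemma inrn_S n : all (inrn n) (Sw n).
Proof. by apply/allP => [[[r c] m]]; rewrite memS /inrn /=; lia. Qed.

Lemma foldB_sym {R : realType} ds (Y : nat -> nat -> R) :
  all (fun d => (1 <= d.1.1 <= d.1.2)%N) ds -> tr Y = Y ->
  tr (foldl (fun Y d => gev lfa lfd lg (blk d) Y) Y ds) =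
  foldl (fun Y d => gev lfa lfd lg (blk d) Y) Y ds.
Proof.
elim: ds Y => //= d ds IH Y /andP[hd hds] hY; apply: IH => //.
exact: blk_sym lfa_sym lfd_sym hd hY.
Qed.

Lemma gRSK_S {R : realType} n (X : nat -> nat -> R) :
  gRSK n n X = gev lfa lfd lg (Sw n) X.
Proof. by rewrite gRSK_wT wT_S. Qed.

Lemma gRSK_agree {R : realType} n (X Y : nat -> nat -> R) :
  agree n X Y -> agree n (gRSK n n X) (gRSK n n Y).
Proof. by move=> h; rewrite !gRSK_S; apply: gev_agree => //; exact: inrn_S. Qed.

Lemma indR_sym {R : realType} {n} (b : UT n) : tr (indR b) = (indR b : nat -> nat -> R).
Proof.
apply/funext => p; apply/funext => q; rewrite /tr /indR /indv.
by rewrite orbC (andbC (q == _)) (andbC (q == _)).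
Qed.

Theorem theorem5p2 (R : realType) (n : nat) (W : nat -> nat -> R)
  (Wpos : forall i j, (1 <= i <= n)%N -> (1 <= j <= n)%N -> 0 < W i j)
  (Wsym : forall i j, (1 <= i <= n)%N -> (1 <= j <= n)%N -> W i j = W j i) :
  (forall i j, (1 <= i <= n)%N -> (1 <= j <= n)%N ->
     gRSK n n W i j = gRSK n n W j i) /\
  (forall a b : UT n, derivable (logT W b a) 0 1) /\
  (\det (logjac n W) = 1 \/ \det (logjac n W) = -1).
Proof.
pose W' := fun p q => if (p <= q)%N then W p q else W q p.
have hag : agree n W W'.
  by move=> p q hp hq; rewrite /W'; case: leqP => // h; apply: Wsym.
have hsym : tr W' = W'.
  apply/funext => p; apply/funext => q; rewrite /tr /W'.
  case: (leqP q p) => h1; case: (leqP p q) => h2 //.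
  by have -> : p = q by lia.
  lia.
have hpos : forall i j, (1 <= i <= n)%N -> (1 <= j <= n)%N -> 0 < W' i j.
  by move=> i j hi hj; rewrite -hag //; apply: Wpos.
have hS : forall X : nat -> nat -> R,
    gRSK n n X = foldl (fun Y d => gev lfa lfd lg (blk d) Y) X (B n).
  by move=> X; rewrite gRSK_S gev_S.
have hB1 : all (fun d => (1 <= d.1.1 <= d.1.2)%N) (B n).
  by apply: sub_all (dok_B n) => d /andP[].
split.
  move=> i j hi hj.
  rewrite (gRSK_agree _ _ _ hag i j hi hj) (gRSK_agree _ _ _ hag j i hj hi) !hS.
  have := congr1 (fun F => F j i) (foldB_sym _ _ hB1 hsym).
  by rewrite /tr => ->.
have key : forall a b : UT n, is_derive (0:R) (1:R) (logT W b a)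
    (sndM (evB (B n) (zipM W' (indR b))) (cp a) (cq a)).
  move=> a b.
  have [ha1 ha2 ha3] := cpq a.
  have -> : logT W b a = (fun t => ln (gev lfa lfd lg (Sw n) (pert W' b t) (cp a) (cq a))).
    apply/funext => t; rewrite /logT -gRSK_S; congr ln.
    apply: gRSK_agree; last 2 first; try by case: (cpq a) => h1 h2 h3; move: h1 h2 h3; rewrite /cp /cq; lia.
    by move=> p q hp hq; rewrite /pert; case: ifP => _; rewrite hag.
  have hI := Inv_gev _ _ _ _ (Inv0 n W' b hpos) (inrn_S n).
  have [e1 p1 d1] := hI (cp a) (cq a) ltac:(lia) ltac:(lia).
  rewrite -e1 in p1.
  have := @dln R (fun t => gev lfa lfd lg (Sw n) (pert W' b t) (cp a) (cq a)) 0 _ p1 d1.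
  rewrite e1 mulrA mulVf ?mul1r; last by apply: lt0r_neq0; rewrite -e1.
  by rewrite /evB -gev_S.
split.
  by move=> a b; have [h _] := key a b.
have -> : logjac n W = Mprod n (B n) W'.
  apply/matrixP => x y; rewrite mxE derive1E.
  have [_ ->] := key (ev x) (ev y).
  have := congr1 (fun M : 'cV[R]_#|{: UT n}| => M x ord0) (chain _ _ _ _ (dok_B n) hsym (indR_sym (ev y))).
  rewrite mxE => ->; rewrite mxE (bigD1 y) //= big1 ?addr0.
    by rewrite mxE ind_self mulr1.
  by move=> k hk; rewrite mxE ind_other ?mulr0 // eq_sym.
exact: (det_Mprod _ _ _ (dok_B n)).
Qed.
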